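(* Let $V$ be a reflexive Banach space, $X$ a Banach space, $\gamma\in\mathcal{L}(V,X)$ with $c_\gamma:=\|\gamma\|_{\mathcal{L}(V,X)}$ and adjoint $\gamma^*\colon X^*\to V^*$. Let $A\colon V\to V^*$, $J\colon X\times X\to\mathbb{R}$ and $f\in V^*$ satisfy: (A1) $A$ is linear and bounded; (A2) $\langle Au,v\rangle_{V^*\times V}=\langle Av,u\rangle_{V^*\times V}$ for all $u,v\in V$; (A3) there is $m_A>0$ with $\langle Au,u\rangle_{V^*\times V}\ge m_A\|u\|_V^2$ for all $u\in V$; (J1) $J$ is locally Lipschitz continuous with respect to its second variable; (J2) there exist $c_0,c_1,c_2\ge 0$ with $\|\partial_2 J(w,v)\|_{X^*}\le c_0+c_1\|v\|_X+c_2\|w\|_X$ for all $w,v\in X$; (J3) there exist $m_\alpha,m_L\ge0$ such that $J_2^0(w_1,v_1;v_2-v_1)+J_2^0(w_2,v_2;v_1-v_2)\le m_\alpha\|v_1-v_2\|_X^2+m_L\|w_1-w_2\|_X\|v_1-v_2\|_X$ for all $w_1,w_2,v_1,v_2\in X$; (S) $m_A>(m_\alpha+m_L)c_\gamma^2$. Define $\mathcal{L}\colon V\times V\to\mathbb{R}$ by $\mathcal{L}(w,v)=\tfrac12\langle Av,v\rangle_{V^*\times V}-\langle f,v\rangle_{V^*\times V}+J(\gamma w,\gamma v)$. Then there exists a unique $u\in V$ such that $0\in\partial_2\mathcal{L}(u,u)$.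
   Context: For a locally Lipschitz function $g$ on a Banach space $Y$, the generalized (Clarke) directional derivative at $x$ in direction $v$ is $g^0(x;v)=\limsup_{y\to x,\lambda\searrow0}\frac{g(y+\lambda v)-g(y)}{\lambda}$, and the Clarke subdifferential is $\partial g(x)=\{\xi\in Y^*:\langle\xi,v\rangle\le g^0(x;v)\ \forall v\in Y\}$. For a function of two variables, $\partial_2$ and $(\cdot)_2^0$ denote the Clarke subdifferential and generalized directional derivative with respect to the second variable. $\|\partial_2J(w,v)\|_{X^*}$ denotes $\sup\{\|\xi\|_{X^*}:\xi\in\partial_2J(w,v)\}$. *)

(* Defs.v *)
From HB Require Import structures.
From mathcomp Require Import all_boot all_order all_algebra.
From mathcomp Require Import all_classical all_reals all_analysis.
Set Implicit Arguments. Unset Strict Implicit. Unset Printing Implicit Defensive.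
Import Order.TTheory GRing.Theory Num.Theory.
Import numFieldNormedType.Exports.
Local Open Scope classical_set_scope.
Local Open Scope ring_scope.

Section Defs.
Variable R : realType.

(* Elements of the (topological) dual Y^* are represented as functions Y -> R
   that are linear and continuous. *)
Definition is_dual (Y : normedModType R) (xi : Y -> R) : Prop :=
  (forall (a : R) (u v : Y), xi (a *: u + v) = a * xi u + xi v) /\ continuous xi.

Definition dnorm (Y : normedModType R) (xi : Y -> R) : R :=
  sup [set `|xi v| | v in [set v : Y | `|v| <= 1]].

Definition opnorm (V X : normedModType R) (g : V -> X) : R :=
  sup [set `|g v| | v in [set v : V | `|v| <= 1]].

Definition reflexive_space (V : normedModType R) : Prop :=
  forall Phi : (V -> R) -> R,
    (forall (a : R) (xi eta : V -> R), is_dual xi -> is_dual eta ->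
        Phi (fun v => a * xi v + eta v) = a * Phi xi + Phi eta) ->
    (exists C : R, forall xi, is_dual xi -> `|Phi xi| <= C * dnorm xi) ->
    exists v : V, forall xi, is_dual xi -> Phi xi = xi v.

Definition locally_lipschitz (Y : normedModType R) (g : Y -> R) : Prop :=
  forall x : Y, exists r : R, exists K : R, 0 < r /\
    forall y z : Y, `|y - x| < r -> `|z - x| < r -> `|g y - g z| <= K * `|y - z|.

Definition clarke_dd (Y : normedModType R) (g : Y -> R) (x v : Y) : \bar R :=
  limf_esup (fun p : Y * R => ((g (p.1 + p.2 *: v) - g p.1) / p.2)%:E)
            (filter_prod (nbhs x) (0^'+)).

Definition clarke_subdiff (Y : normedModType R) (g : Y -> R) (x : Y) : set (Y -> R) :=
  [set xi | is_dual xi /\ forall v : Y, ((xi v)%:E <= clarke_dd g x v)%E].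

End Defs.

(* Main.v *)
Require Import Defs.
From HB Require Import structures.
From mathcomp Require Import all_boot all_order all_algebra.
From mathcomp Require Import all_classical all_reals all_analysis.
From mathcomp Require Import ring lra.
Import Order.TTheory GRing.Theory Num.Theory.
Import numFieldNormedType.Exports.
Local Open Scope classical_set_scope.
Local Open Scope ring_scope.
Section Clarke.
Context {R : realType} {Y : normedModType R}.
Implicit Types (g : Y -> R) (x v : Y).

Lemma ballY x e y : ball x e y = (`|x - y| < e).
Proof. by rewrite -ball_normE. Qed.

Lemma dd_lb g x v c :
  (forall e, 0 < e -> exists y lam, `|x - y| < e /\ 0 < lam /\ lam < e /\
      c <= (g (y + lam *: v) - g y) / lam) ->
  (c%:E <= clarke_dd g x v)%E.
Proof.
move=> H; rewrite /clarke_dd /limf_esup; apply: le_ereal_inf_tmp => _ [S [[A B] [/= nA nB] sub] <-].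
move/nbhs_ballP: nA => [e1 e1p bA].
move/nbhs_ballP: nB => [e2 e2p bB].
have [y [lam [h1 [h2 [h3 h4]]]]] := H (Num.min e1 e2) (ltac:(by rewrite lt_min e1p e2p)).
apply: le_ereal_sup_tmp; exists ((g (y + lam *: v) - g y) / lam)%:E; last by rewrite lee_fin.
exists (y, lam) => //; apply: sub; split => /=.
- apply: bA; rewrite ballY; apply: (lt_le_trans h1); by rewrite ge_min lexx.
- apply: bB => //; rewrite /ball /= sub0r normrN gtr0_norm //; apply: (lt_le_trans h3); by rewrite ge_min lexx orbT.
Qed.

Lemma dd_ub g x v M : (clarke_dd g x v < M%:E)%E ->
  exists2 e, 0 < e & forall y lam, `|x - y| < e -> 0 < lam -> lam < e ->
     (g (y + lam *: v) - g y) / lam < M.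
Proof.
rewrite /clarke_dd /limf_esup => /ereal_inf_lt [_ [S [[A B] [/= nA nB] sub] <-]] sM.
move/nbhs_ballP: nA => [e1 e1p bA].
move/nbhs_ballP: nB => [e2 e2p bB].
exists (Num.min e1 e2); first by rewrite lt_min e1p e2p.
move=> y lam h1 h2 h3.
rewrite -lte_fin; apply: le_lt_trans sM; apply: ereal_sup_ubound.
exists (y, lam) => //; apply: sub; split => /=.
- apply: bA; rewrite ballY; apply: (lt_le_trans h1); by rewrite ge_min lexx.
- apply: bB => //; rewrite /ball /= sub0r normrN gtr0_norm //; apply: (lt_le_trans h3); by rewrite ge_min lexx orbT.
Qed.


Lemma ereal_lb_help (D1 D2 : \bar R) (a M : R) :
  (a%:E <= D1)%E -> (D1 + D2 <= M%:E)%E -> (D2 <= (M - a)%:E)%E.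
Proof.
case: D1 => [d1||] //; case: D2 => [d2||] //=; rewrite ?lee_fin.
- move=> h1 h2; lra.
all: by move=> *; rewrite ?leNye.
Qed.

Lemma Gcont (h : Y -> R) (x0 e : Y) : continuous h -> continuous (fun s : R => h (x0 + s *: e)).
Proof.
move=> hc s; apply: (continuous_comp (f := fun s : R => x0 + s *: e) (g := h)); last exact: hc.
apply: continuousD; first exact: cst_continuous.
apply: continuousZr_tmp => //.
Qed.

Lemma relax_convex (h : Y -> R) (x0 e : Y) (k : R) :
  0 <= k -> continuous h ->
  (forall v1 v2 : Y, (clarke_dd h v1 (v2 - v1)%R + clarke_dd h v2 (v1 - v2)%R
      <= (k * `|(v1 - v2)%R| ^+ 2)%:E)%E) ->
  forall t, 0 <= t -> t <= 1 ->
  h (x0 + t *: e) <= (1 - t) * h x0 + t * h (x0 + e) + k * `|e| ^+ 2 * t * (1 - t) / 2.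
Proof.
move=> k0 hc H t t0 t1.
pose G := fun s : R => h (x0 + s *: e).
have G0 : G 0 = h x0 by rewrite /G scale0r addr0.
have G1 : G 1 = h (x0 + e) by rewrite /G scale1r.
have Gc : continuous G := Gcont h x0 e hc.
pose kk := k * `|e| ^+ 2.
have kk0 : 0 <= kk by rewrite /kk mulr_ge0 // sqr_ge0.
pose c := G 1 + kk / 2 - G 0.
pose phi := fun s => G s + kk / 2 * (s * s) - G 0 - c * s.
have phic : continuous phi.
  move=> s; rewrite /phi.
  apply: cvgB; last by apply: cvgM; [exact: cvg_cst | exact: cvg_id].
  apply: cvgB; last exact: cvg_cst.
  apply: cvgD; first exact: Gc.
  apply: cvgM; first exact: cvg_cst.
  apply: cvgM; exact: cvg_id.
rewrite -G0 -G1 -/(G t) -/kk.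
have phi0 : phi 0 = 0 by rewrite /phi; lra.
have phi1 : phi 1 = 0 by rewrite /phi /c mulr1; lra.
suff : phi t <= 0 by rewrite /phi /c; nra.
rewrite leNgt; apply/negP => pt.
have [p p01 pmax] := EVT_max (f := phi) ler01 (continuous_subspaceT phic).
move: p01; rewrite in_itv /= => /andP[p0 p1].
have php : 0 < phi p by apply: lt_le_trans pt (pmax t _); rewrite in_itv /= t0 t1.
have p1' : p < 1.
  rewrite lt_neqAle p1 andbT; apply/eqP => e1; move: php; rewrite e1 phi1; lra.
have p0' : 0 < p.
  rewrite lt_neqAle p0 andbT; apply/eqP => e1; move: php; rewrite -e1 phi0; lra.
pose eps := phi p / 2.
have eps0 : 0 < eps by rewrite /eps; lra.
pose psi := fun s => phi s + eps * s.
have psic : continuous psi.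
  move=> s; rewrite /psi; apply: cvgD; first exact: phic.
  apply: cvgM; [exact: cvg_cst| exact: cvg_id].
have [r rp1 rmin] := EVT_min (f := psi) (ltW p1') (continuous_subspaceT psic).
move: rp1; rewrite in_itv /= => /andP[rp r1].
have rp' : p < r.
  rewrite lt_neqAle rp andbT; apply/eqP => e1.
  have := rmin 1; rewrite in_itv /= (ltW p1') lexx -e1 /psi phi1 => /(_ isT).
  have := mulr_gt0 p0' php; rewrite /eps; nra.
pose s := r - p.
have s0 : 0 < s by rewrite /s subr_gt0.
pose v1 := x0 + p *: e.
pose v2 := x0 + r *: e.
have d21 : v2 - v1 = s *: e by rewrite /v1 /v2 /s opprD addrACA subrr add0r -scalerBl.
have d12 : v1 - v2 = (- s) *: e by rewrite /v1 /v2 /s opprD addrACA subrr add0r -scalerBl; congr (_ *: _); ring.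
have nv : `|v1 - v2| ^+ 2 = s ^+ 2 * `|e| ^+ 2 by rewrite d12 normrZ normrN gtr0_norm // exprMn.
have HH := H v1 v2; rewrite nv in HH.
have D1lb : (((c - kk * p) * s)%:E <= clarke_dd h v1 (v2 - v1)%R)%E.
  apply: dd_lb => e' e'0.
  pose lam := Num.min (e' / 2) (Num.min (p / s) (e' / (2 * (s * `|e|) + 1))).
  have se0 : 0 <= s * `|e| by rewrite mulr_ge0 // ltW.
  have lam0 : 0 < lam by rewrite /lam !lt_min !divr_gt0 // ?e'0; lra.
  have lam1 : lam <= e' / 2 by rewrite /lam ge_min lexx.
  have lam2 : lam <= p / s by rewrite /lam !ge_min lexx orbT.
  have lam3 : lam <= e' / (2 * (s * `|e|) + 1) by rewrite /lam !ge_min lexx !orbT.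
  have lam2' : lam * s <= p by rewrite -ler_pdivlMr.
  have lam3' : lam * (2 * (s * `|e|) + 1) <= e' by rewrite -ler_pdivlMr //; lra.
  exists (x0 + (p - lam * s) *: e), lam; split.
    have -> : v1 - (x0 + (p - lam * s) *: e) = (lam * s) *: e.
      by rewrite /v1 opprD addrACA subrr add0r -scalerBl; congr (_ *: _); ring.
    rewrite normrZ gtr0_norm ?mulr_gt0 //; nra.
  split => //; split; first lra.
  rewrite d21.
  have -> : x0 + (p - lam * s) *: e + lam *: (s *: e) = x0 + p *: e.
    by rewrite scalerA -addrA -scalerDl; congr (_ + _ *: _); ring.
  have := pmax (p - lam * s); rewrite in_itv /= => /(_ ltac:(apply/andP; split; nra)).
  rewrite /phi -/(G p) -/(G (p - lam * s)) => hp.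
  rewrite ler_pdivlMr //.
  have := mulr_ge0 kk0 (mulr_ge0 (ltW lam0) (ltW lam0)).
  have := mulr_ge0 (mulr_ge0 kk0 (mulr_ge0 (ltW lam0) (ltW lam0))) (sqr_ge0 s).
  nra.
have D2ub := ereal_lb_help _ _ _ _ D1lb HH.
pose M' := k * (s ^+ 2 * `|e| ^+ 2) - (c - kk * p) * s + eps * s / 2.
have D2lt : (clarke_dd h v2 (v1 - v2)%R < M'%:E)%E.
  apply: le_lt_trans D2ub _; rewrite lte_fin /M'.
  have := mulr_gt0 eps0 s0; lra.
have [del del0 Hdel] := dd_ub _ _ _ _ D2lt.
pose lam := Num.min (del / 2) (Num.min 1 (eps / (2 * (s * kk) + 1))).
have skk0 : 0 <= s * kk by rewrite mulr_ge0 // ltW.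
have lam0 : 0 < lam by rewrite /lam !lt_min !divr_gt0 //; lra.
have lam1 : lam <= del / 2 by rewrite /lam ge_min lexx.
have lam2 : lam <= 1 by rewrite /lam !ge_min lexx orbT.
have lam3 : lam <= eps / (2 * (s * kk) + 1) by rewrite /lam !ge_min lexx !orbT.
have lam3' : lam * (2 * (s * kk) + 1) <= eps by rewrite -ler_pdivlMr //; lra.
have := Hdel v2 lam; rewrite subrr normr0 => /(_ del0 lam0 ltac:(lra)).
have -> : v2 + lam *: (v1 - v2) = x0 + (r - lam * s) *: e.
  rewrite d12 /v2 scalerA -addrA -scalerDl; congr (_ + _ *: _); ring.
rewrite -/(G (r - lam * s)) -/(G r) ltr_pdivrMr //.
rewrite /M' -/kk => hq.
have lsr : p <= r - lam * s <= 1.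
  apply/andP; split.
    have h1 : 0 <= 1 - lam by rewrite subr_ge0.
    have := mulr_ge0 h1 (ltW s0); rewrite /s; nra.
  have := mulr_gt0 lam0 s0; lra.
have := rmin (r - lam * s); rewrite in_itv /= => /(_ lsr).
rewrite /psi /phi.
have := mulr_gt0 lam0 s0.
have h2 : 0 <= eps - lam * (2 * (s * kk) + 1) by rewrite subr_ge0.
have := mulr_ge0 (mulr_ge0 (ltW lam0) (ltW s0)) h2.
have e1 : k * (s ^+ 2 * `|e| ^+ 2) = kk * s ^+ 2 by rewrite /kk; ring.
rewrite e1 in hq.
have sE : s = r - p by [].

nra.
Qed.
End Clarke.



Lemma cont_by_bound {R : realType} {Y : normedModType R} (g : Y -> R) x :
  (forall e, 0 < e -> exists2 d, 0 < d & forall y, `|x - y| < d -> `|g x - g y| < e) ->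
  {for x, continuous g}.
Proof.
move=> H; apply/cvgrPdist_lt => e e0; have [d d0 Hd] := H e e0.
by apply/nbhs_ballP; exists d => // y; rewrite ballY => /Hd.
Qed.

Lemma lip_cont {R : realType} {Y : normedModType R} (g : Y -> R) :
  locally_lipschitz g -> continuous g.
Proof.
move=> H x; apply: cont_by_bound => e e0.
have [r [K [r0 HK]]] := H x.
have K1 : 0 < `|K| + 1 by rewrite ltr_pwDr // normr_ge0.
exists (Num.min r (e / (`|K| + 1))); first by rewrite lt_min r0 divr_gt0.
move=> y; rewrite lt_min => /andP[h1 h2].
have := HK y x; rewrite distrC h1 subrr normr0 r0 => /(_ isT isT).
move=> h; rewrite distrC; apply: (le_lt_trans h).
have : `|x - y| * (`|K| + 1) < e by rewrite -ltr_pdivlMr.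
have := ler_norm K; have := normr_ge0 (x - y); nra.
Qed.

Lemma subge0 {R : numDomainType} {x y : R} : x <= y -> 0 <= y - x.
Proof. by rewrite subr_ge0. Qed.

Lemma lra_help1 {R : realType} (a b m x : R) :
  a < m + x -> x < (b - m)/2 -> b - a < (b - m)/2 -> False.
Proof. move=> *; lra. Qed.

Lemma le_via_lt {R : realType} (x y : \bar R) :
  (forall M : R, (y < M%:E)%E -> (x <= M%:E)%E) -> (x <= y)%E.
Proof.
case: y => [r||] H.
- apply/lee_addgt0Pr => e e0; apply: H; rewrite lte_fin; lra.
- by rewrite leey.
- case: x H => [r||] H.
  + have := H (r - 1)%R; rewrite ltNyr lee_fin => /(_ isT) h; exfalso; lra.
  + by have := H 0%R; rewrite ltNyr => /(_ isT).
  + by [].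
Qed.

Lemma lt_sub_help {R : realType} (D : \bar R) (a M : R) :
  (a%:E + D < M%:E)%E -> exists2 eta : R, 0 < eta & (D < (M - a - eta)%:E)%E.
Proof.
case: D => [r||] //= h.
- move: h; rewrite ?lte_fin => h; exists ((M - a - r) / 2)%R; rewrite ?lte_fin; lra.
- by exists 1 => //; rewrite ltNyr.
Qed.

Lemma ereal_key {R : realType} (D1 D2 : \bar R) (a1 a2 B : R) :
  (0%:E <= a1%:E + D1)%E -> (0%:E <= a2%:E + D2)%E -> (D1 + D2 <= B%:E)%E ->
  0 <= a1 + a2 + B.
Proof.
case: D1 => [d1||]; case: D2 => [d2||] //=; rewrite ?lee_fin //.
- move=> h1 h2 h3; lra.
Qed.

Lemma selfadd (Z : zmodType) (x : Z) : x = x + x -> x = 0.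
Proof. by move=> h; have := subrr x; rewrite {1}h addrK. Qed.

Section Main.
Context {R : realType} {V X : completeNormedModType R}
  (gamma : V -> X) (A : V -> V -> R) (J : X -> X -> R) (f : V -> R)
  (mA malpha mL : R).
Hypothesis glin : forall (a : R) (u v : V), gamma (a *: u + v) = a *: gamma u + gamma v.
Hypothesis gcont : continuous gamma.
Hypothesis fdual : is_dual f.
Hypothesis Adual : forall u : V, is_dual (A u).
Hypothesis Alin : forall (a : R) (u w v : V), A (a *: u + w) v = a * A u v + A w v.
Hypothesis Abnd : exists C : R, forall u v : V, `|A u v| <= C * `|u| * `|v|.
Hypothesis Asym : forall u v : V, A u v = A v u.
Hypothesis mA0 : 0 < mA.
Hypothesis Acoer : forall u : V, mA * `|u| ^+ 2 <= A u u.
Hypothesis Jlip : forall w : X, locally_lipschitz (J w).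
Hypothesis ma0 : 0 <= malpha.
Hypothesis mL0 : 0 <= mL.
Hypothesis J3 : forall w1 w2 v1 v2 : X,
      (clarke_dd (J w1) v1 (v2 - v1)%R + clarke_dd (J w2) v2 (v1 - v2)%R
       <= (malpha * `|v1 - v2| ^+ 2 + mL * `|w1 - w2| * `|v1 - v2|)%:E)%E.
Hypothesis Sm : (malpha + mL) * opnorm gamma ^+ 2 < mA.

Let cg := opnorm gamma.

Lemma g0 : gamma 0 = 0.
Proof.
apply: selfadd; have h := glin 1 0 0; rewrite !scale1r addr0 in h; exact: h.
Qed.

Lemma gZ a u : gamma (a *: u) = a *: gamma u.
Proof. by have := glin a u 0; rewrite addr0 g0 addr0. Qed.

Lemma gD u v : gamma (u + v) = gamma u + gamma v.
Proof. by have := glin 1 u v; rewrite !scale1r. Qed.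

Lemma gN u : gamma (- u) = - gamma u.
Proof. by rewrite -scaleN1r gZ scaleN1r. Qed.

Lemma gB u v : gamma (u - v) = gamma u - gamma v.
Proof. by rewrite gD gN. Qed.

Lemma fD u v : f (u + v) = f u + f v.
Proof. by have := fdual.1 1 u v; rewrite scale1r mul1r. Qed.

Lemma f0 : f 0 = 0.
Proof. apply: selfadd; have h := fD 0 0; rewrite addr0 in h; exact: h. Qed.

Lemma fZ a u : f (a *: u) = a * f u.
Proof. by have := fdual.1 a u 0; rewrite addr0 f0 addr0. Qed.

Lemma fB u v : f (u - v) = f u - f v.
Proof. by rewrite fD -scaleN1r fZ mulN1r. Qed.

Lemma A2D u v w : A u (v + w) = A u v + A u w.
Proof. by have := (Adual u).1 1 v w; rewrite scale1r mul1r. Qed.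

Lemma A20 u : A u 0 = 0.
Proof. apply: selfadd; have h := A2D u 0 0; rewrite addr0 in h; exact: h. Qed.

Lemma A2Z u a v : A u (a *: v) = a * A u v.
Proof. by have := (Adual u).1 a v 0; rewrite addr0 A20 addr0. Qed.

Lemma A2B u v w : A u (v - w) = A u v - A u w.
Proof. by rewrite A2D -scaleN1r A2Z mulN1r. Qed.

Lemma A1D u w v : A (u + w) v = A u v + A w v.
Proof. by rewrite Asym A2D -!(Asym v). Qed.

Lemma A1Z a u v : A (a *: u) v = a * A u v.
Proof. by rewrite Asym A2Z Asym. Qed.

Lemma A1B u w v : A (u - w) v = A u v - A w v.
Proof. by rewrite Asym A2B -!(Asym v). Qed.

Lemma gsup : has_sup [set `|gamma v| | v in [set v : V | `|v| <= 1]].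
Proof.
have [d d0 Hd] : exists2 d : R, 0 < d & forall y : V, `|y| < d -> `|gamma y| < 1.
  have := gcont 0; move/cvgrPdist_lt => /(_ 1 ltr01) /nbhs_ballP [d d0 Hd].
  exists d => // y hy; have := Hd y; rewrite ballY sub0r normrN g0 sub0r normrN; exact.
split; first by exists `|gamma 0|, 0 => //=; rewrite normr0 ler01.
exists (2 / d) => _ [y /= y1 <-].
have h : `|(d / 2) *: y| < d.
  rewrite normrZ gtr0_norm ?divr_gt0 //; nra.
have := Hd _ h; rewrite gZ normrZ gtr0_norm ?divr_gt0 // => h2.
rewrite ler_pdivlMr //; nra.
Qed.

Lemma cg0 : 0 <= cg.
Proof.
have := sup_upper_bound gsup; apply.
by exists 0 => //=; rewrite ?g0 normr0 ?ler01.
Qed.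

Lemma gbound v : `|gamma v| <= cg * `|v|.
Proof.
have Hub := sup_upper_bound gsup.
have [->|v0] := eqVneq v 0; first by rewrite g0 !normr0 mulr0.
have nv0 : 0 < `|v| by rewrite normr_gt0.
have h1 : `|gamma (`|v|^-1 *: v)| <= cg.
  apply: Hub; exists (`|v|^-1 *: v) => //=.
  by rewrite normrZ normfV normr_id mulVf // gt_eqF.
move: h1; rewrite gZ normrZ normfV normr_id => h1.
by rewrite -ler_pdivrMr // mulrC.
Qed.

Lemma Aexp x z : A (x + z) (x + z) = A x x + A x z + A z x + A z z.
Proof. by rewrite !A1D !A2D addrA. Qed.

Lemma AbndK : exists2 K : R, 0 < K & forall u v : V, `|A u v| <= K * `|u| * `|v|.
Proof.
have [C HC] := Abnd; exists (`|C| + 1); first by rewrite ltr_pwDr // normr_ge0.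
move=> u v; apply: (le_trans (HC u v)).
have := ler_norm C; have := normr_ge0 u; have := normr_ge0 v.
have := mulr_ge0 (normr_ge0 u) (normr_ge0 v); nra.
Qed.

Lemma Acont : continuous (fun v => A v v).
Proof.
have [K K0 HK] := AbndK.
move=> x; apply: cont_by_bound => e e0.
have P : 0 < K * (1 + 2 * `|x|) + 1.
  have := normr_ge0 x; have := mulr_ge0 (ltW K0) (normr_ge0 x); nra.
exists (Num.min 1 (e / (K * (1 + 2 * `|x|) + 1))).
  by rewrite lt_min ltr01 divr_gt0.
move=> y; rewrite lt_min => /andP[h1 h2].
have h3 : `|x - y| * (K * (1 + 2 * `|x|) + 1) < e by rewrite -ltr_pdivlMr.
have -> : y = x + (y - x) by rewrite addrC subrK.
rewrite Aexp.
have e1 : A x x - (A x x + A x (y - x) + A (y - x) x + A (y - x) (y - x))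
   = - (A x (y - x) + A (y - x) x + A (y - x) (y - x)) by ring.
rewrite e1 normrN.
have b1 := HK x (y - x); have b2 := HK (y - x) x; have b3 := HK (y - x) (y - x).
rewrite distrC in h1 h3.
set z := `|y - x| in h1 h3 b1 b2 b3 *.
have z0 : 0 <= z by rewrite normr_ge0.
have := ler_normD (A x (y - x) + A (y - x) x) (A (y - x) (y - x)).
have := ler_normD (A x (y - x)) (A (y - x) x).
have := normr_ge0 x.
have := mulr_ge0 (mulr_ge0 (ltW K0) z0) (subge0 (ltW h1)).
have := mulr_ge0 (ltW K0) z0.
have := mulr_ge0 (mulr_ge0 (ltW K0) z0) (normr_ge0 x).
nra.
Qed.

Definition L (w v : V) := 2^-1 * A v v - f v + J (gamma w) (gamma v).

Lemma Jcont w : continuous (J w).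
Proof. exact: lip_cont. Qed.

Lemma Lcont w : continuous (L w).
Proof.
move=> x; rewrite /L; apply: cvgD.
  apply: cvgB; last exact: fdual.2.
  apply: cvgM; [exact: cvg_cst | exact: Acont].
apply: (continuous_comp (f := gamma) (g := J (gamma w))); first exact: gcont.
exact: Jcont.
Qed.

Lemma J3w w : forall v1 v2 : X,
  (clarke_dd (J w) v1 (v2 - v1)%R + clarke_dd (J w) v2 (v1 - v2)%R
      <= (malpha * `|(v1 - v2)%R| ^+ 2)%:E)%E.
Proof. by move=> v1 v2; have := J3 w w v1 v2; rewrite subrr normr0 mulr0 mul0r addr0. Qed.

Lemma gb2 d : `|gamma d| ^+ 2 <= cg ^+ 2 * `|d| ^+ 2.
Proof.
have := gbound d; have := normr_ge0 (gamma d); have := mulr_ge0 cg0 (normr_ge0 d); nra.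
Qed.

Lemma SC w a d t : 0 <= t -> t <= 1 ->
  L w (a + t *: d) <= (1 - t) * L w a + t * L w (a + d)
     - (mA - malpha * cg ^+ 2) * (t * (1 - t)) * `|d| ^+ 2 / 2.
Proof.
move=> t0 t1.
have hJ := relax_convex (J (gamma w)) (gamma a) (gamma d) malpha ma0 (Jcont _) (J3w _) t t0 t1.
rewrite /L gD gZ [gamma (a + d)]gD.
rewrite !Aexp !A1Z !A2Z !fD !fZ (Asym d a).
have tt0 : 0 <= t * (1 - t) by rewrite mulr_ge0 // subr_ge0.
have := mulr_ge0 tt0 (subge0 (Acoer d)).
have := mulr_ge0 (mulr_ge0 tt0 ma0) (subge0 (gb2 d)).
move: hJ; set Ja := J (gamma w) (gamma a); set Jb := J (gamma w) (gamma a + gamma d).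
set Jt := J (gamma w) (gamma a + t *: gamma d).
nra.
Qed.

Lemma mu0 : 0 < mA - malpha * cg ^+ 2.
Proof. have := mulr_ge0 mL0 (sqr_ge0 cg); rewrite subr_gt0; move: Sm; rewrite -/cg; nra. Qed.

Lemma Lbelow w : exists m0, forall v, m0 <= L w v.
Proof.
set mu := mA - malpha * cg ^+ 2.
have mup : 0 < mu := mu0.
have [rho rho0 Hr] : exists2 rho : R, 0 < rho & forall y, `|y| < rho -> L w 0 - 1 < L w y.
  have := Lcont w 0; move/cvgrPdist_lt => /(_ 1 ltr01) /nbhs_ballP [d d0 Hd].
  exists d => // y hy; have := Hd y; rewrite ballY sub0r normrN => /(_ hy) h.
  have := ler_norm (L w 0 - L w y); lra.
pose D := 4 / (mu * rho ^+ 2).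
have D0 : 0 <= D by rewrite /D divr_ge0 // mulr_ge0 // ?sqr_ge0 // ltW.
have DE : D * (mu * rho ^+ 2) = 4 by rewrite /D mulfVK // mulf_neq0 ?gt_eqF // exprn_gt0.
exists (L w 0 - 1 - D) => x.
have [hx|hx] := ltP `|x| rho.
  have := Hr x hx; lra.
set z := `|x| in hx.
have z0 : 0 < z by apply: lt_le_trans hx.
pose t := rho / (2 * z).
have t0 : 0 < t by rewrite /t divr_gt0 // mulr_gt0.
have tz2 : 2 * z * t = rho by rewrite /t mulrC mulfVK // mulf_neq0 ?gt_eqF.
have th : t <= 1 / 2 by rewrite /t ler_pdivrMr ?mulr_gt0 //; lra.
have hs := SC w 0 x t (ltW t0) ltac:(lra).
rewrite !add0r -/z -/mu in hs.
have htx : `|t *: x| < rho by rewrite normrZ gtr0_norm // -/z; nra.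
have := Hr _ htx => hl.
set Q := L w x - L w 0.
have F1 : t * Q >= -1 + mu * (t * (1 - t)) * z ^+ 2 / 2 by rewrite /Q; nra.
have F2 : t * Q >= -1 + mu * rho * z / 8.
  have e1 : mu * t * z ^+ 2 = mu * rho * z / 2 by rewrite -tz2; field.
  have := mulr_ge0 (mulr_ge0 (mulr_ge0 (ltW mup) (ltW t0)) (sqr_ge0 z)) (subge0 th).
  nra.
have F3 : rho * Q >= -2 * z + mu * rho * z ^+ 2 / 4.
  have e2 : rho * Q = 2 * z * (t * Q) by rewrite -tz2; ring.
  rewrite e2; have := mulr_ge0 (ltW z0) (subge0 F2); nra.
have F4 : 0 <= mu * rho ^+ 2 * (Q + D).
  have := sqr_ge0 (mu * rho * z / 2 - 2).
  have := mulr_ge0 (mulr_ge0 (ltW mup) (ltW rho0)) (subge0 F3).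
  nra.
have : 0 <= Q + D.
  by move: F4; rewrite pmulr_rge0 // mulr_gt0 // exprn_gt0.
rewrite /Q; lra.
Qed.

Lemma invS_lt (d : R) : 0 < d -> exists N : nat, forall n, (N <= n)%N -> n.+1%:R^-1 < d.
Proof.
move=> d0; have [N _ HN] := nbhs_infty_gtr (d^-1).
exists N => n hn; have := HN n hn; rewrite /= => h.
rewrite invf_plt ?posrE ?ltr0Sn //; apply: (lt_trans h).
by rewrite ltr_nat.
Qed.

Lemma Lmin w : exists u, forall v, L w u <= L w v.
Proof.
set mu := mA - malpha * cg ^+ 2.
have mup : 0 < mu := mu0.
have [m0 Hm0] := Lbelow w.
pose S := [set L w v | v in [set: V]].
have hinf : has_inf S.
  split; first by exists (L w 0), 0.
  by exists m0 => _ [v _ <-].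
pose m := inf S.
have mle : forall v, m <= L w v by move=> v; apply: ge_inf; [exact: hinf.2 | by exists v].
have /choice [xs Hx] : forall n : nat, exists x, L w x < m + n.+1%:R^-1.
  move=> n; have hn : 0 < n.+1%:R^-1 :> R by rewrite invr_gt0 ltr0Sn.
  have [_ [v _ <-] He] := inf_adherent hn hinf.
  by exists v.
have Hc : forall n k, (n <= k)%N -> mu * `|xs n - xs k| ^+ 2 <= 8 * n.+1%:R^-1.
  move=> n k nk.
  have hs := SC w (xs n) (xs k - xs n) (1/2) ltac:(lra) ltac:(lra).
  rewrite [xs n + (xs k - xs n)]addrC subrK -/mu in hs.
  have := mle (xs n + 1 / 2 *: (xs k - xs n)).
  have := Hx n; have := Hx k.
  have : k.+1%:R^-1 <= n.+1%:R^-1 :> R.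
    by rewrite lef_pV2 ?posrE ?ltr0Sn // ler_nat ltnS.
  rewrite distrC.
  move: hs; set q := `|xs k - xs n| ^+ 2.
  set a := (n.+1%:R^-1 : R); set b := (k.+1%:R^-1 : R).
  set Lm := L w (xs n + (1 / 2) *: (xs k - xs n)); set Ln := L w (xs n); set Lk := L w (xs k).
  move=> h1 h2 h3 h4 h5; lra.
have cvx : cvgn xs.
  apply: cauchy_cvg; apply: cauchy_exP => eps eps0.
  have ep : 0 < eps * eps * mu / 8 by rewrite divr_gt0 // !mulr_gt0.
  have [N HN] := invS_lt _ ep.
  exists (xs N); exists N => // n /= hn.
  rewrite ballY.
  have := Hc N n hn; have := HN N (leqnn N).
  set z := `|xs N - xs n|; set a := (N.+1%:R^-1 : R) => h1 h2.
  have h3 : z ^+ 2 < eps ^+ 2 by rewrite -(ltr_pM2l mup); lra.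
  have := normr_ge0 (xs N - xs n); rewrite -/z; nra.
exists (lim (xs @ \oo)).
have Lu : L w (lim (xs @ \oo)) <= m.
  rewrite leNgt; apply/negP => hu.
  pose del := (L w (lim (xs @ \oo)) - m) / 2.
  have del0 : 0 < del by rewrite /del divr_gt0 // subr_gt0.
  have hc := @continuous_cvg _ _ _ _ _ xs (L w) _ (Lcont w _) cvx.
  have [N1 _ HN1] := (proj1 (cvgrPdist_lt _ _) (hc _)) del del0.
  have [N2 HN2] := invS_lt _ del0.
  have := HN1 (maxn N1 N2) (leq_maxl _ _); have := HN2 (maxn N1 N2) (leq_maxr _ _).
  have := Hx (maxn N1 N2); rewrite /=.
  set a := L w (xs (maxn N1 N2)); set b := L w (lim (xs @ \oo)).
  move=> h1 h2 h3; rewrite /del -/b in h2 h3 del0 *.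
  have h4 : b - a < (b - m) / 2 := le_lt_trans (ler_norm _) h3.
  exact: (lra_help1 _ _ _ _ h1 h2 h4).
by move=> v; apply: le_trans Lu (mle v).
Qed.

Lemma stat_min w u : (forall v, L w u <= L w v) ->
  forall d, (0%:E <= clarke_dd (L w) u d)%E.
Proof.
move=> H d; apply: dd_lb => e e0; exists u, (e / 2); split; first by rewrite subrr normr0.
split; first by rewrite divr_gt0.
split; first lra.
apply: divr_ge0; [rewrite subr_ge0; exact: H | lra].
Qed.

Lemma Lquot w y d lam : lam != 0 ->
  (L w (y + lam *: d) - L w y) / lam =
  A y d + lam / 2 * A d d - f d +
  (J (gamma w) (gamma y + lam *: gamma d) - J (gamma w) (gamma y)) / lam.
Proof.
move=> l0; rewrite /L gD gZ Aexp !A1Z !A2Z fD fZ (Asym d y).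
by field.
Qed.

Lemma Lub w u d : (clarke_dd (L w) u d <=
   (A u d - f d)%:E + clarke_dd (J (gamma w)) (gamma u) (gamma d))%E.
Proof.
apply: le_via_lt => M hM.
have [eta eta0 hD] := lt_sub_help _ _ _ hM.
have [del1 del10 Hdel1] := dd_ub _ _ _ _ hD.
have [K K0 HK] := AbndK.
have cg1 : 0 < cg + 1 by have := cg0; lra.
have Kd : 0 < 2 * K * (`|d| + 1) ^+ 2.
  by rewrite !mulr_gt0 // exprn_gt0 // ltr_pwDr // normr_ge0.
pose del := Num.min (del1 / (cg + 1)) (Num.min 1 (eta / (2 * K * (`|d| + 1) ^+ 2))).
have del0 : 0 < del by rewrite /del !lt_min !divr_gt0 // ltr01.
have dl1 : del <= del1 / (cg + 1) by rewrite /del ge_min lexx.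
have dl2 : del <= 1 by rewrite /del !ge_min lexx orbT.
have dl3 : del <= eta / (2 * K * (`|d| + 1) ^+ 2) by rewrite /del !ge_min lexx !orbT.
have dl1' : del * (cg + 1) <= del1 by rewrite -ler_pdivlMr.
have dl3' : del * (2 * K * (`|d| + 1) ^+ 2) <= eta by rewrite -ler_pdivlMr.
pose S0 := [set p : V * R | `|u - p.1| < del /\ 0 < p.2 /\ p.2 < del].
rewrite /clarke_dd /limf_esup.
apply: ge_ereal_inf.
exists (ereal_sup ((fun p : V * R => ((L w (p.1 + p.2 *: d) - L w p.1) / p.2)%:E) @` S0)).
  exists S0 => //.
  exists (ball u del, [set t : R | 0 < t /\ t < del]).
    split => /=.
      by apply/nbhs_ballP; exists del.
    apply/nbhs_ballP; exists del => // t; rewrite ballY sub0r normrN => ht t0.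
    by split => //; move: ht; rewrite gtr0_norm.
  by move=> [y lam] [/= hy [hl1 hl2]]; rewrite /S0 /=; split => //; move: hy; rewrite ballY.
apply: ge_ereal_sup => _ [[y lam] [/= hy [hl0 hl1]] <-].
rewrite lee_fin Lquot ?gt_eqF //.
have hJ : (J (gamma w) (gamma y + lam *: gamma d) - J (gamma w) (gamma y)) / lam < M - (A u d - f d) - eta.
  apply: Hdel1 => //.
    rewrite -gB; apply: (le_lt_trans (gbound _)).
    have := normr_ge0 (u - y); have := cg0; nra.
  have := cg0; nra.
have e1 : A y d = A u d + A (y - u) d by rewrite A1B; ring.
have b1 := HK (y - u) d.
have b2 := HK d d.
have hyu : `|y - u| < del by rewrite distrC.
have n1 : A (y - u) d <= `|A (y - u) d| := ler_norm _.
have n2 : A d d <= `|A d d| := ler_norm _.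
set z := `|y - u| in hyu b1.
set nd := `|d| in b1 b2 Kd dl3 dl3'.
have nd0 : 0 <= nd by rewrite normr_ge0.
have z0 : 0 <= z by rewrite normr_ge0.
have q1 : K * z * nd <= eta / 2.
  have : z * nd <= del * (nd + 1) ^+ 2.
    have := mulr_ge0 z0 nd0; nra.
  have := mulr_ge0 (ltW K0) (subge0 (ltW hyu)); nra.
have q2 : lam / 2 * A d d <= eta / 2.
  have : nd * nd <= (nd + 1) ^+ 2 by nra.
  have := mulr_ge0 (ltW K0) (ltW hl0).
  have := mulr_ge0 (mulr_ge0 (ltW K0) (ltW hl0)) (subge0 (ltW hl1)).
  nra.
rewrite e1; lra.
Qed.

Lemma key w1 w2 u1 u2 :
  (forall d, (0%:E <= clarke_dd (L w1) u1 d)%E) ->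
  (forall d, (0%:E <= clarke_dd (L w2) u2 d)%E) ->
  mA * `|u1 - u2| ^+ 2 <= malpha * cg ^+ 2 * `|u1 - u2| ^+ 2
       + mL * cg ^+ 2 * `|w1 - w2| * `|u1 - u2|.
Proof.
move=> H1 H2.
have h1 := le_trans (H1 (u2 - u1)) (Lub w1 u1 (u2 - u1)).
have h2 := le_trans (H2 (u1 - u2)) (Lub w2 u2 (u1 - u2)).
rewrite gB in h1; rewrite gB in h2.
have h3 := J3 (gamma w1) (gamma w2) (gamma u1) (gamma u2).
have := ereal_key _ _ _ _ _ h1 h2 h3.
have e1 : A u1 (u2 - u1) - f (u2 - u1) + (A u2 (u1 - u2) - f (u1 - u2))
   = - A (u1 - u2) (u1 - u2).
  by rewrite !A2B !A1B !fB (Asym u2 u1); ring.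
rewrite e1 -!gB.
have := Acoer (u1 - u2).
have b1 := gb2 (u1 - u2).
have b2 := gbound (u1 - u2).
have b3 := gbound (w1 - w2).
have := mulr_ge0 ma0 (subge0 b1).
have n1 := normr_ge0 (gamma (u1 - u2)).
have n2 := normr_ge0 (gamma (w1 - w2)).
have n3 := mulr_ge0 cg0 (normr_ge0 (u1 - u2)).
have := mulr_ge0 mL0 (mulr_ge0 n2 (subge0 b2)).
have := mulr_ge0 mL0 (mulr_ge0 n3 (subge0 b3)).
set G1 := `|gamma (u1 - u2)|; set G2 := `|gamma (w1 - w2)|.
set z := `|u1 - u2|; set y := `|w1 - w2|.
nra.
Qed.

Lemma exist_fix : exists u, forall d, (0%:E <= clarke_dd (L u) u d)%E.
Proof.
have /choice [Sf HS] : forall w, exists u, forall d, (0%:E <= clarke_dd (L w) u d)%E.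
  by move=> w; have [u hu] := Lmin w; exists u; exact: stat_min.
set mu := mA - malpha * cg ^+ 2.
have mup : 0 < mu := mu0.
pose k := mL * cg ^+ 2 / mu.
have k0 : 0 <= k by apply: divr_ge0; [exact: mulr_ge0 mL0 (sqr_ge0 cg) | exact: ltW].
have k1 : k < 1.
  rewrite /k ltr_pdivrMr // mul1r /mu; move: Sm; rewrite -/cg; lra.
have lip : forall w1 w2, `|Sf w1 - Sf w2| <= k * `|w1 - w2|.
  move=> w1 w2; have := key w1 w2 (Sf w1) (Sf w2) (HS w1) (HS w2).
  set z := `|Sf w1 - Sf w2|; set y := `|w1 - w2|.
  have z0 : 0 <= z by rewrite normr_ge0.
  have y0 : 0 <= y by rewrite normr_ge0.
  have [->|zp] := eqVneq z 0; first by rewrite mulr_ge0.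
  have zp' : 0 < z by rewrite lt_neqAle eq_sym zp.
  move=> h.
  have h2 : mu * z <= mL * cg ^+ 2 * y.
    rewrite -(ler_pM2r zp'); rewrite /mu; nra.
  by rewrite /k mulrAC ler_pdivlMr // mulrC.
have ctr : is_contraction (totalfun Sf).
  exists (NngNum k0); split => //=.
  by move=> [x y] _ /=; exact: lip.
have [p _ hp] := banach_fixed_point ctr closedT (ex_intro _ 0 I).
exists p => d; have hp' : Sf p = p := esym hp.
by have := HS p d; rewrite hp'.
Qed.

Lemma main_result : exists! u, clarke_subdiff (L u) u (fun _ => 0).
Proof.
have [u hu] := exist_fix.
exists u; split.
  split; last exact: hu.
  split; last exact: cst_continuous.
  by move=> *; rewrite mulr0 addr0.
move=> u' [_ hu'].
have := key u u' u u' hu hu'.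
set z := `|u - u'|.
have : 0 < mA - (malpha + mL) * cg ^+ 2 by rewrite subr_gt0.
move=> h1 h2.
have : z ^+ 2 <= 0.
  have : (mA - (malpha + mL) * cg ^+ 2) * z ^+ 2 <= 0 by nra.
  by rewrite pmulr_rle0.
move=> hz.
have z0 : z = 0.
  by apply/eqP; rewrite -sqrf_eq0 eq_le hz sqr_ge0.
by apply/eqP; rewrite -subr_eq0 -normr_eq0 -/z z0.
Qed.

End Main.

Theorem lemma3 (R : realType) (V X : completeNormedModType R)
  (gamma : V -> X) (A : V -> V -> R) (J : X -> X -> R) (f : V -> R)
  (mA c0 c1 c2 malpha mL : R) :
  reflexive_space V ->
  (* gamma in L(V,X) *)
  (forall (a : R) (u v : V), gamma (a *: u + v) = a *: gamma u + gamma v) ->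
  continuous gamma ->
  (* f in V^* *)
  is_dual f ->
  (* (A1): A : V -> V^* linear and bounded *)
  (forall u : V, is_dual (A u)) ->
  (forall (a : R) (u w v : V), A (a *: u + w) v = a * A u v + A w v) ->
  (exists C : R, forall u v : V, `|A u v| <= C * `|u| * `|v|) ->
  (* (A2) *)
  (forall u v : V, A u v = A v u) ->
  (* (A3) *)
  0 < mA -> (forall u : V, mA * `|u| ^+ 2 <= A u u) ->
  (* (J1) *)
  (forall w : X, locally_lipschitz (J w)) ->
  (* (J2) *)
  0 <= c0 -> 0 <= c1 -> 0 <= c2 ->
  (forall w v : X, forall xi, clarke_subdiff (J w) v xi ->
      dnorm xi <= c0 + c1 * `|v| + c2 * `|w|) ->
  (* (J3) *)
  0 <= malpha -> 0 <= mL ->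
  (forall w1 w2 v1 v2 : X,
      (clarke_dd (J w1) v1 (v2 - v1)%R + clarke_dd (J w2) v2 (v1 - v2)%R
       <= (malpha * `|v1 - v2| ^+ 2 + mL * `|w1 - w2| * `|v1 - v2|)%:E)%E) ->
  (* (S) *)
  (malpha + mL) * opnorm gamma ^+ 2 < mA ->
  let L := fun w v : V => 2^-1 * A v v - f v + J (gamma w) (gamma v) in
  exists! u : V, clarke_subdiff (L u) u (fun _ => 0).
Proof.
move=> hrefl glin gcont fdual Adual Alin Abnd Asym mA0 Acoer Jlip c00 c10 c20 J2
  ma0 mL0 J3 Sm L.
exact: (@main_result R V X gamma A J f mA malpha mL glin gcont fdual Adual Abnd Asym Acoer Jlip ma0 mL0 J3 Sm).
Qed.
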